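(* Let $\mathcal{T}$ be a $2$-eligible microdata table and $l=2$. Then the algorithm described in the context (with arbitrary tie-breaking) always terminates during Phase One or Phase Two, and its output is a feasible solution of the reformulated tuple minimization problem whose residue set $\ddot{R}$ satisfies $|\ddot{R}| \le OPT + 1$.
   Context: A microdata table $\mathcal{T}$ is a multiset of $n$ tuples with values on $d$ quasi-identifier (QI) attributes and one sensitive attribute (SA). For a multiset $Q$ and SA value $v$, $h(Q,v)$ is the number of tuples in $Q$ with SA value $v$, $h(Q)=\max_v h(Q,v)$, pillars of $Q$ are the $v$ with $h(Q,v)=h(Q)$; $Q$ is $l$-eligible if $|Q|\ge l\cdot h(Q)$. Let $Q_1,\dots,Q_s$ be the maximal classes of tuples of $\mathcal{T}$ with identical values on all QI attributes. Reformulated tuple minimization: choose sub-multisets $Q'_i\subseteq Q_i$ and $R'=\mathcal{T}\setminus\bigcup_i Q'_i$ with all $Q'_i$ and $R'$ $l$-eligible, minimizing $|R'|$; $OPT$ is the minimum. The algorithm only moves tuples from the groups into a set $R$ (initially empty). Phase One: for each $i$, while $Q_i$ is not $l$-eligible, move a tuple of a pillar of $Q_i$ to $R$; if then $R$ is $l$-eligible, terminate. Phase Two terminology (w.r.t. current state): a group $Q$ is thin if $|Q|=l\cdot h(Q)$ and fat if $|Q|\ge l\cdot h(Q)+1$; $Q$ is conflicting if some pillar of $Q$ is a pillar of $R$; $Q$ is dead if thin and conflicting, alive otherwise; an SA value $v$ is alive if some alive group $Q$ has $h(Q,v)>0$. Phase Two iterates: if no SA value is alive, Phase Two ends (and Phase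 Three would follow). Otherwise pick an alive SA value $v$ minimizing $h(R,v)$ and an alive group $Q$ with $h(Q,v)>0$ (ties arbitrary); if $Q$ is fat move one tuple with SA value $v$ from $Q$ to $R$; if $Q$ is thin move one tuple of each pillar of $Q$ to $R$. If $R$ is now $l$-eligible, the algorithm terminates; $\ddot{R}$ is $R$ at termination. *)

(* Defs.v *)
(* MathComp (boot). Microdata tables as multisets = sequences of
   tuples (qi, sa) with qi : Q (the vector of QI values) and sa : V. *)
From mathcomp Require Import all_boot.
Set Implicit Arguments. Unset Strict Implicit. Unset Printing Implicit Defensive.

Section Micro.
Variables (Q V : eqType).
Notation tup := (Q * V)%type.
Notation mset := (seq tup).

Definition hv (S : mset) (v : V) : nat := count (fun t => t.2 == v) S.
(* h(S) = max_v h(S,v)  (0 for the empty multiset) *)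
Definition hmax (S : mset) : nat := \max_(t <- S) hv S t.2.
Definition pillar (S : mset) (v : V) : bool := hv S v == hmax S.
Definition eligible (l : nat) (S : mset) : bool := l * hmax S <= size S.

(* the QI values occurring in T; the maximal QI-classes are indexed by them *)
Definition qis (T : mset) : seq Q := undup (map fst T).
Definition qclass (T : mset) (q : Q) : mset := [seq t <- T | t.1 == q].

(* Feasible solution of the reformulated tuple minimization problem:
   sel q is the sub-multiset Q'_q of the class Q_q, and R' is the rest. *)
Definition feasible (l : nat) (T : mset) (sel : Q -> mset) (R' : mset) : Prop :=
  [/\ perm_eq T (R' ++ flatten [seq sel q | q <- qis T]),
      (forall q, q \in qis T -> all (fun t => t.1 == q) (sel q)),
      (forall q, q \in qis T -> eligible l (sel q)) &
      eligible l R'].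

Definition thin (l : nat) (S : mset) : bool := size S == l * hmax S.
Definition fat (l : nat) (S : mset) : bool := l * hmax S + 1 <= size S.
Definition conflicting (S R : mset) : Prop := exists v, pillar S v && pillar R v.
Definition dead (l : nat) (S R : mset) : Prop := thin l S /\ conflicting S R.
Definition alive (l : nat) (S R : mset) : Prop := ~ dead l S R.
Definition alive_val (l : nat) (qs : seq Q) (G : Q -> mset) (R : mset) (v : V) : Prop :=
  exists2 q, q \in qs & alive l (G q) R /\ 0 < hv (G q) v.

Inductive phase := PhaseOne of seq Q | PhaseTwo | PhaseThree | Terminated.
Record state := St { ph : phase; grp : Q -> mset; res : mset }.

Definition upd (G : Q -> mset) (q : Q) (S : mset) : Q -> mset :=
  fun q' => if q' == q then S else G q'.

(* One step of the algorithm (all tie-breaking choices allowed).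
   qs = the indices of the groups, i.e. qis T. *)
Inductive step (l : nat) (qs : seq Q) : state -> state -> Prop :=
  | s1_move q rest G R t :
      ~~ eligible l (G q) -> t \in G q -> pillar (G q) t.2 ->
      step l qs (St (PhaseOne (q :: rest)) G R)
                (St (PhaseOne (q :: rest)) (upd G q (rem t (G q))) (t :: R))
  | s1_next q rest G R :
      eligible l (G q) ->
      step l qs (St (PhaseOne (q :: rest)) G R) (St (PhaseOne rest) G R)
  | s1_term G R : eligible l R ->
      step l qs (St (PhaseOne [::]) G R) (St Terminated G R)
  | s1_to2 G R : ~~ eligible l R ->
      step l qs (St (PhaseOne [::]) G R) (St PhaseTwo G R)
  | s2_end G R : (forall v, ~ alive_val l qs G R v) ->
      step l qs (St PhaseTwo G R) (St PhaseThree G R)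
  | s2_fat G R v q t :
      alive_val l qs G R v ->
      (forall w, alive_val l qs G R w -> hv R v <= hv R w) ->
      q \in qs -> alive l (G q) R -> 0 < hv (G q) v ->
      fat l (G q) -> t \in G q -> t.2 = v ->
      step l qs (St PhaseTwo G R)
        (St (if eligible l (t :: R) then Terminated else PhaseTwo)
            (upd G q (rem t (G q))) (t :: R))
  | s2_thin G R v q :
      alive_val l qs G R v ->
      (forall w, alive_val l qs G R w -> hv R v <= hv R w) ->
      q \in qs -> alive l (G q) R -> 0 < hv (G q) v ->
      thin l (G q) ->
      let P := undup [seq t <- G q | pillar (G q) t.2] in
      step l qs (St PhaseTwo G R)
        (St (if eligible l (P ++ R) then Terminated else PhaseTwo)
            (upd G q (foldr (fun t S => rem t S) (G q) P)) (P ++ R)).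

Definition init (T : mset) : state := St (PhaseOne (qis T)) (qclass T) [::].

Inductive reach (l : nat) (qs : seq Q) (s : state) : state -> Prop :=
  | reach_refl : reach l qs s s
  | reach_step s1 s2 : reach l qs s s1 -> step l qs s1 s2 -> reach l qs s s2.

End Micro.
Arguments PhaseTwo {Q}. Arguments PhaseThree {Q}. Arguments Terminated {Q}.

(* Main.v *)
Require Import Defs.
From mathcomp Require Import all_boot zify.
From Stdlib Require Import Classical.
Set Implicit Arguments. Unset Strict Implicit. Unset Printing Implicit Defensive.


Section Gen.
Variables (Q V : eqType).
Notation tup := (Q * V)%type.

Lemma argmax_seq (A : eqType) (f : A -> nat) (s : seq A) :
  s != [::] -> exists2 x, x \in s & \max_(y <- s) f y = f x.
Proof.
elim: s => // x s IH _; rewrite big_cons.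
case: s IH => [|y s] IH.
  by exists x; rewrite ?mem_head // big_nil maxn0.
have [z zin ->] := IH isT.
case: (leqP (f z) (f x)) => h.
  by exists x; rewrite ?mem_head //; lia.
by exists z; [rewrite inE zin orbT | lia].
Qed.

Lemma hv_le_hmax (S : seq tup) v : hv S v <= hmax S.
Proof.
case: (posnP (hv S v)) => [->//|]; rewrite /hv -has_count => /hasP[t tin /eqP <-].
rewrite /hmax; exact: (@leq_bigmax_seq _ S xpredT (fun t : tup => hv S t.2) t tin isT).
Qed.

Lemma hmax_le (S : seq tup) k : (forall v, hv S v <= k) -> hmax S <= k.
Proof. by move=> H; apply/bigmax_leqP_seq => t _ _; apply: H. Qed.

Lemma hmax_pillar (S : seq tup) : S != [::] -> exists2 t, t \in S & hv S t.2 = hmax S.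
Proof. move=> /(argmax_seq (fun t : tup => hv S t.2)) [t tin e]; by exists t. Qed.

Lemma hv2 (S : seq tup) a b : a != b -> hv S a + hv S b <= size S.
Proof.
move=> ab; rewrite /hv -count_predUI.
rewrite (@eq_count _ (predI _ _) pred0); last first.
  by move=> t /=; apply/negP => /andP[/eqP -> /eqP e]; rewrite e eqxx in ab.
by rewrite count_pred0 addn0 count_size.
Qed.

Lemma dom_count (A : eqType) (s1 s2 : seq A) :
  (forall x, count_mem x s1 <= count_mem x s2) -> forall P, count P s1 <= count P s2.
Proof.
elim: s1 s2 => [|x s1 IH] s2 H P /=; first by [].
have xin : x \in s2 by rewrite -has_pred1 has_count; apply: leq_trans (H x); rewrite /= eqxx.
have pe := perm_to_rem xin.
rewrite (permP pe) /=; rewrite leq_add2l; apply: IH => y.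
have := H y; rewrite (permP pe) /=; lia.
Qed.

Lemma sumn_upd (G : Q -> seq tup) q S (a : pred tup) (qs : seq Q) :
  uniq qs -> q \in qs ->
  sumn [seq count a (upd G q S x) | x <- qs] + count a (G q) =
  sumn [seq count a (G x) | x <- qs] + count a S.
Proof.
elim: qs => //= x qs IH /andP[xn u]; rewrite inE => /orP[/eqP e|qin].
  subst x; rewrite /upd eqxx.
  have -> : [seq count a (if x == q then S else G x) | x <- qs] = [seq count a (G x) | x <- qs].
    by apply/eq_in_map => y yin; case: eqP => // e; subst y; rewrite yin in xn.
  lia.
have := IH u qin; rewrite /upd; case: eqP => e; first by subst x; rewrite qin in xn.
lia.
Qed.

Lemma sumn_one (G : Q -> seq tup) q (P : pred tup) (qs : seq Q) :
  uniq qs -> (forall q', q' \in qs -> all (fun t => t.1 == q') (G q')) ->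
  (forall t, P t -> t.1 == q) ->
  sumn [seq count P (G q') | q' <- qs] = if q \in qs then count P (G q) else 0.
Proof.
move=> + + HP; elim: qs => //= x qs IH /andP[xn u] HG.
have IH' := IH u (fun q' h => HG q' (@mem_behead _ (x :: qs) q' h)).
rewrite inE IH'; case: (eqVneq q x) => [e|ne].
  subst x; rewrite (negbTE xn) addn0 //.
have -> : count P (G x) = 0.
  rewrite -(count_pred0 (G x)); apply: eq_in_count => t tin /=.
  apply/negP => /HP /eqP e. move: (HG x (mem_head _ _)) => /allP /(_ t tin) /eqP e'.
  by rewrite -e e' eqxx in ne.
by [].
Qed.

End Gen.


Lemma cnt_split (A : Type) (a b : pred A) s :
  count a s = count (fun x => a x && b x) s + count (fun x => a x && ~~ b x) s.
Proof. elim: s => //= x s ->; case: (a x); case: (b x) => /=; lia. Qed.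

Section Main.
Variables (Q V : eqType) (T : seq (Q * V)).
Notation tup := (Q * V)%type.
Notation qs := (qis T).

Lemma uniq_qs : uniq qs. Proof. exact: undup_uniq. Qed.

Lemma perm_cnt R (G : Q -> seq tup) :
  perm_eq T (R ++ flatten [seq G q | q <- qs]) ->
  forall a, count a T = count a R + sumn [seq count a (G q) | q <- qs].
Proof. by move/permP => H a; rewrite H count_cat count_flatten -map_comp. Qed.

Lemma cnt_perm R (G : Q -> seq tup) :
  (forall a, count a T = count a R + sumn [seq count a (G q) | q <- qs]) ->
  perm_eq T (R ++ flatten [seq G q | q <- qs]).
Proof. by move=> H; apply/permP => a; rewrite H count_cat count_flatten -map_comp. Qed.

Lemma tpE (q : Q) (u : V) (t : tup) : (t == (q, u)) = (t.1 == q) && (t.2 == u).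
Proof. by case: t => a b; rewrite xpair_eqE. Qed.

Lemma notin_qs q : q \notin qs -> count (fun t : tup => t.1 == q) T = 0.
Proof.
move=> qn; rewrite -(count_pred0 T); apply: eq_in_count => t tin /=.
apply/negP => /eqP e; move: qn; rewrite mem_undup -e.
by move/negP; apply; apply: map_f.
Qed.

Lemma all_fst_cnt (S : seq tup) q (P : pred tup) :
  all (fun t => t.1 == q) S -> count P S = count (fun t => (t.1 == q) && P t) S.
Proof. by move=> /allP H; apply: eq_in_count => t /H ->. Qed.

Lemma feas_lb sel R' : feasible 2 T sel R' -> forall q u,
  2 * count (pred1 (q, u)) T - count (fun t : tup => t.1 == q) T <= count (pred1 (q, u)) R'.
Proof.
case=> pe Hall Hel _ q u; have C := perm_cnt pe.
pose pu := fun t : tup => (t.1 == q) && (t.2 == u).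
pose pn := fun t : tup => (t.1 == q) && ~~ (t.2 == u).
have Np : count (fun t : tup => t.1 == q) T = count pu T + count pn T
  by exact: cnt_split.
have E1 : count (pred1 (q, u)) T = count pu T.
  by apply: eq_count => t; rewrite /= tpE.
have E1' : count (pred1 (q, u)) R' = count pu R'.
  by apply: eq_count => t; rewrite /= tpE.
case qin: (q \in qs); last first.
  by have := notin_qs (negbT qin); lia.
have HA := Hall q qin; have HE := Hel q qin.
have A1 : count pu T = count pu R' + count pu (sel q).
  rewrite C (@sumn_one _ _ sel q) ?uniq_qs ?qin //.
  by move=> t /andP[].
have A2 : count pn T = count pn R' + count pn (sel q).
  rewrite C (@sumn_one _ _ sel q) ?uniq_qs ?qin //.
  by move=> t /andP[].
have S1 : size (sel q) = count pu (sel q) + count pn (sel q).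
  have sz : count (fun t : tup => t.1 == q) (sel q) = size (sel q) by apply/eqP; rewrite -all_count.
  by rewrite -sz; apply: cnt_split.
have hv1 : hv (sel q) u = count pu (sel q) by rewrite /hv (all_fst_cnt _ HA).
have H := hv_le_hmax (sel q) u.
move: HE; rewrite /eligible => HE.
rewrite E1 E1' Np; lia.
Qed.

End Main.


Lemma foldr_rem_perm (A : eqType) (P S : seq A) :
  uniq P -> {subset P <= S} -> perm_eq S (P ++ foldr (fun t S => rem t S) S P).
Proof.
elim: P => [|p P IH] /=; first by rewrite perm_refl.
move=> /andP[pn u] sub.
have IH' := IH u (fun x xin => sub x (mem_behead (x := x) (s := p :: P) xin)).
set F := foldr _ _ _ in IH' *.
have pS : p \in S by apply: sub; rewrite mem_head.
have pF : p \in F.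
  by move: pS; rewrite (perm_mem IH') mem_cat (negbTE pn).
apply: (perm_trans IH').
apply: (@perm_trans _ (P ++ p :: rem p F)).
  by rewrite perm_cat2l; exact: perm_to_rem.
by rewrite -cat1s perm_catCA.
Qed.

Lemma cnt_uniq (A : eqType) (P S : seq A) k :
  uniq P -> (forall p, p \in P -> k <= count_mem p S) -> size P * k <= size S.
Proof.
elim: P S => [|p P IH] S //= /andP[pn u] H.
have e : size S = count_mem p S + size (filter (predC1 p) S).
  by rewrite size_filter -(count_predC (pred1 p) S); congr (_ + _); apply: eq_count.
have := IH (filter (predC1 p) S) u.
have H1 : forall p0, p0 \in P -> k <= count_mem p0 (filter (predC1 p) S).
  move=> p0 p0in; rewrite count_filter.
  rewrite (@eq_count _ _ (pred1 p0)); first by apply: H; rewrite inE p0in orbT.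
  move=> x /=; case: (eqVneq x p0) => [->|]; last by [].
  by rewrite /=; apply/eqP => e'; rewrite -e' p0in in pn.
move=> /(_ H1); have := H p (mem_head _ _); lia.
Qed.



Lemma sumn_le2 (A : eqType) (f g : A -> nat) (s : seq A) :
  (forall x, x \in s -> f x <= 2 * g x) -> sumn (map f s) <= 2 * sumn (map g s).
Proof.
elim: s => //= x s IH H.
have := H x (mem_head _ _); have := IH (fun y yin => H y (mem_behead (x := y) (s := x :: s) yin)); lia.
Qed.

Lemma minimizer (A : Type) (P : A -> Prop) (f : A -> nat) :
  (exists v, P v) -> exists v, P v /\ forall w, P w -> f v <= f w.
Proof.
move=> [v Pv].
suff: forall n v, f v <= n -> P v -> exists v, P v /\ forall w, P w -> f v <= f w.
  by move=> /(_ (f v) v (leqnn _) Pv).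
elim=> [|n IH] v0 hv0 Pv0.
  by exists v0; split=> // w _; move: hv0; lia.
case: (classic (exists w, P w /\ f w < f v0)) => [[w [Pw lt]]|nex].
  apply: (IH w) => //; lia.
exists v0; split=> // w Pw; case: (leqP (f v0) (f w)) => // lt.
by exfalso; apply: nex; exists w.
Qed.


Section RU.
Variables (Q V : eqType).
Notation tup := (Q * V)%type.

Lemma maj_lt (R : seq tup) w x : size R < 2 * hv R w -> x != w -> hv R x < hv R w.
Proof. move=> H ne; have := hv2 R ne; lia. Qed.

Lemma maj_hmax (R : seq tup) w : size R < 2 * hv R w -> hmax R = hv R w.
Proof.
move=> H; apply/eqP; rewrite eqn_leq hv_le_hmax andbT; apply: hmax_le => x.
case: (eqVneq x w) => [->//|ne]; exact/ltnW/(maj_lt H).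
Qed.

Lemma R_upd (X R : seq tup) w : size R < 2 * hv R w -> hv X w = 0 ->
  (forall x, hv X x <= 1) -> size X <= 2 ->
  [/\ hv (X ++ R) w = hv R w, size (X ++ R) <= 2 * hv R w + 1 &
      (~~ eligible 2 (X ++ R) -> size (X ++ R) < 2 * hv (X ++ R) w)].
Proof.
move=> H Xw X1 X2.
have hvc : forall x, hv (X ++ R) x = hv X x + hv R x by move=> x; rewrite /hv count_cat.
have e : hv (X ++ R) w = hv R w by rewrite hvc Xw.
split=> //; first by rewrite size_cat; lia.
have hm : hmax (X ++ R) <= hv R w.
  apply: hmax_le => x; case: (eqVneq x w) => [->|ne]; first by rewrite e.
  have := maj_lt H ne; have := X1 x; rewrite hvc; lia.
rewrite /eligible -ltnNge e; lia.
Qed.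

End RU.

Section Main.
Variables (Q V : eqType) (T : seq (Q * V)).
Notation tup := (Q * V)%type.
Notation qs := (qis T).

Definition Dpart (R : seq tup) q := [seq t <- R | t.1 == q].
Definition Dinv (R : seq tup) := forall q, Dpart R q = [::] \/
  exists u, all (fun t : tup => t.2 == u) (Dpart R q) /\
    size (Dpart R q) <= 2 * count (pred1 (q, u)) T - count (fun t : tup => t.1 == q) T.

Lemma Dinv_dom R sel R' : Dinv R -> feasible 2 T sel R' ->
  forall P, count P R <= count P R'.
Proof.
move=> D F; apply: dom_count => -[q w].
have -> : count_mem (q, w) R = count_mem (q, w) (Dpart R q).
  rewrite /Dpart count_filter; apply: eq_count => t /=.
  by case: (eqVneq t (q, w)) => [->|] //=; rewrite eqxx.
case: (D q) => [->//|[u [Hu Hs]]].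
case: (eqVneq w u) => [->|ne].
  apply: leq_trans (count_size _ _) _; apply: leq_trans Hs _; exact: feas_lb F q u.
rewrite (@eq_in_count _ _ pred0) ?count_pred0 //.
move=> t tin /=; move/allP: Hu => /(_ t tin) /eqP e.
apply/negP => /eqP et; rewrite et /= in e; by rewrite e eqxx in ne.
Qed.

End Main.


Section Main.
Variables (Q V : eqType) (T : seq (Q * V)).
Notation tup := (Q * V)%type.
Notation qs := (qis T).

Definition Inv (s : state Q V) : Prop :=
  [/\ perm_eq T (res s ++ flatten [seq grp s q | q <- qs]),
      (forall q, all (fun t : tup => t.1 == q) (grp s q)) &
  match ph s with
  | PhaseOne l => [/\ all (fun q => q \in qs) l,
                      (forall q, q \in qs -> q \notin l -> eligible 2 (grp s q)) &
                      Dinv T (res s)]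
  | PhaseTwo => (forall q, q \in qs -> eligible 2 (grp s q)) /\
      exists w, size (res s) < 2 * hv (res s) w /\
        (forall sel R', feasible 2 T sel R' -> hv (res s) w <= hv R' w)
  | PhaseThree => False
  | Terminated => [/\ (forall q, q \in qs -> eligible 2 (grp s q)),
      eligible 2 (res s) &
      (forall sel R', feasible 2 T sel R' -> size (res s) <= size R' + 1)]
  end].

Definition mu (s : state Q V) : nat :=
  2 * (size T - size (res s)) +
  match ph s with PhaseOne l => size l + 1 | _ => 0 end.

Lemma Inv_size s : Inv s -> size (res s) <= size T.
Proof. by case=> pe _ _; rewrite (perm_size pe) size_cat leq_addr. Qed.

Lemma cnt_grp R (G : Q -> seq tup) q (P : pred tup) :
  perm_eq T (R ++ flatten [seq G x | x <- qs]) ->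
  (forall x, all (fun t : tup => t.1 == x) (G x)) -> q \in qs ->
  (forall t, P t -> t.1 == q) -> count P T = count P R + count P (G q).
Proof.
move=> pe HG qin HP; by rewrite (perm_cnt pe) (@sumn_one _ _ G q) ?uniq_qs ?qin //; move=> x _; apply: HG.
Qed.

Lemma grp_upd R (G : Q -> seq tup) q (X S' : seq tup) :
  perm_eq T (R ++ flatten [seq G x | x <- qs]) -> q \in qs ->
  perm_eq (G q) (X ++ S') ->
  perm_eq T ((X ++ R) ++ flatten [seq upd G q S' x | x <- qs]).
Proof.
move=> pe qin pG; apply: cnt_perm => a.
have := perm_cnt pe a; have := sumn_upd G S' a (uniq_qs T) qin.
have E1 : count a (G q) = count a X + count a S' by rewrite (permP pG) count_cat.
rewrite count_cat; lia.
Qed.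

Lemma all_upd (G : Q -> seq tup) q (S' : seq tup) :
  (forall x, all (fun t : tup => t.1 == x) (G x)) -> {subset S' <= G q} ->
  forall x, all (fun t : tup => t.1 == x) (upd G q S' x).
Proof.
move=> HG sub x; rewrite /upd; case: eqP => [->|_]; last exact: HG.
by apply/allP => t /sub tin; move/allP: (HG q) => /(_ t tin).
Qed.

Lemma elig_upd (G : Q -> seq tup) q (S' : seq tup) x :
  x != q -> upd G q S' x = G x.
Proof. by rewrite /upd => /negbTE ->. Qed.


Lemma Dpart_cnt R q u : all (fun t : tup => t.2 == u) (Dpart R q) ->
  count (pred1 (q, u)) (Dpart R q) = size (Dpart R q).
Proof.
move=> Hu; apply/eqP; rewrite -all_count; apply/allP => t tin.
rewrite /= ?inE tpE (allP Hu t tin) andbT.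
by move: tin; rewrite /Dpart mem_filter => /andP[].
Qed.

Lemma Dpart_count R q (P : pred tup) : (forall t, P t -> t.1 == q) ->
  count P R = count P (Dpart R q).
Proof.
move=> HP; rewrite /Dpart count_filter; apply: eq_count => t /=.
by case Pt: (P t) => //=; rewrite HP.
Qed.

Lemma step_move q rest G R t :
  Inv (St (PhaseOne (q :: rest)) G R) -> ~~ eligible 2 (G q) -> t \in G q ->
  pillar (G q) t.2 ->
  Inv (St (PhaseOne (q :: rest)) (upd G q (rem t (G q))) (t :: R)).
Proof.
case=> /= pe HG [Hl Hel HD] ne tin pil.
have qin : q \in qs by move: Hl => /andP[].
have tq : t.1 == q by move/allP: (HG q) => /(_ t tin).
split => /=.
- exact: (grp_upd (X := [:: t]) pe qin (perm_to_rem tin)).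
- by apply: all_upd => //; exact: mem_rem.
split => //.
- move=> x xin xn; rewrite elig_upd; first exact: Hel.
  by move: xn; rewrite inE negb_or => /andP[].
move=> x; case: (eqVneq x q) => [->|nex]; last first.
  have -> : Dpart (t :: R) x = Dpart R x.
    by rewrite /Dpart /= (eqP tq) eq_sym (negbTE nex).
  exact: HD.
have -> : Dpart (t :: R) q = t :: Dpart R q by rewrite /Dpart /= tq.
set S := G q; set D := Dpart R q.
have cA : forall u, count (pred1 (q, u)) T = count (pred1 (q, u)) D + hv S u.
  move=> u; rewrite (@cnt_grp R G q) // ?(@Dpart_count R q (pred1 (q, u))) //; try by move=> t' /=; rewrite tpE => /andP[].
  suff -> : count_mem (q, u) (G q) = hv S u by [].
  rewrite /hv; apply: eq_in_count => t' tin' /=.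
  by rewrite tpE (allP (HG q) t' tin').
have cN : count (fun t : tup => t.1 == q) T = size D + size S.
  rewrite (@cnt_grp R G q) // (@Dpart_count R q) //.
  congr (_ + _); apply/eqP; rewrite -all_count.
    by apply/allP => t'; rewrite mem_filter => /andP[].
  exact: HG.
move: ne pil; rewrite /eligible /pillar -ltnNge => ne /eqP pil.
rewrite -/S in ne pil.
right; case D0: D => [|d D'].
  exists t.2; split; first by rewrite /= eqxx.
  have := cA t.2; rewrite D0 /=; rewrite D0 in cN; rewrite /= in cN; lia.
case: (HD q) => [D0'|[u [Hu Hs]]].
  by rewrite -/D in D0'; rewrite D0' in D0.
rewrite -/D in Hu Hs.
have cD := Dpart_cnt Hu; rewrite -/D in cD.
have cAu := cA u; rewrite cD in cAu.
case: (eqVneq t.2 u) => [tu|tu].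
  exists u; rewrite -D0 /= tu eqxx Hu; split => //.
  move: Hs; rewrite cAu cN -tu pil; lia.
exfalso; have := hv2 S tu; move: Hs; rewrite cAu cN pil D0 /=; lia.
Qed.

Lemma exists_alive (G : Q -> seq tup) R w : eligible 2 T ->
  perm_eq T (R ++ flatten [seq G q | q <- qs]) -> size R < 2 * hv R w ->
  exists u, u != w /\ alive_val 2 qs G R u.
Proof.
move=> ET pe Hw; apply: NNPP => H.
have H' : forall u, u != w -> ~ alive_val 2 qs G R u by move=> u ne A; apply: H; exists u.
have grp : forall q, q \in qs -> count predT (G q) <= 2 * hv (G q) w.
  move=> q qin; rewrite count_predT.
  case: (classic (dead 2 (G q) R)) => [[th [v /andP[pS pR]]]|nd].
    case: (eqVneq v w) => [e|ne]; last first.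
      exfalso; have := maj_lt Hw ne; move: pR; rewrite /pillar (maj_hmax Hw) => /eqP ->; lia.
    subst v; move: th pS; rewrite /thin /pillar => /eqP -> /eqP ->; lia.
  have : all (fun t : tup => t.2 == w) (G q).
    apply/allP => t tin; apply/negPn/negP => ne; apply: (H' t.2 ne); exists q => //; split => //.
    by rewrite /hv -has_count; apply/hasP; exists t.
  by rewrite all_count /hv => /eqP ->; lia.
have s1 : size T = size R + sumn [seq count predT (G q) | q <- qs].
  by rewrite -!count_predT (perm_cnt pe).
have s2 : hv T w = hv R w + sumn [seq hv (G q) w | q <- qs].
  by rewrite /hv (perm_cnt pe).
have := sumn_le2 grp; have := hv_le_hmax T w; move: ET; rewrite /eligible; lia.
Qed.

Lemma step_next q rest G R :
  Inv (St (PhaseOne (q :: rest)) G R) -> eligible 2 (G q) ->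
  Inv (St (PhaseOne rest) G R).
Proof.
case=> /= pe HG [Hl Hel HD] el; split => //=; split => //.
- by move: Hl => /andP[].
move=> x xin xn; case: (eqVneq x q) => [->//|ne]; apply: Hel => //.
by rewrite inE negb_or ne.
Qed.

Lemma step_term G R :
  Inv (St (PhaseOne [::]) G R) -> eligible 2 R -> Inv (St Terminated G R).
Proof.
case=> /= pe HG [Hl Hel HD] el; split => //=; split => //.
- by move=> x xin; apply: Hel.
move=> sel R' F; have := Dinv_dom HD F predT; rewrite !count_predT; lia.
Qed.

Lemma step_to2 G R :
  Inv (St (PhaseOne [::]) G R) -> ~~ eligible 2 R -> Inv (St PhaseTwo G R).
Proof.
case=> /= pe HG [Hl Hel HD] nel; split => //=; split.
- by move=> x xin; apply: Hel.
have RN : R != [::] by apply/eqP => e; rewrite e /eligible /hmax big_nil in nel.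
have [t tin e] := hmax_pillar RN.
exists t.2; split.
  by move: nel; rewrite /eligible -ltnNge e.
by move=> sel R' F; apply: Dinv_dom HD F _.
Qed.

Lemma step2_gen G R q (X S' : seq tup) :
  Inv (St PhaseTwo G R) -> q \in qs ->
  perm_eq (G q) (X ++ S') -> eligible 2 S' ->
  (forall w, size R < 2 * hv R w -> hv X w = 0) -> (forall x, hv X x <= 1) -> size X <= 2 ->
  Inv (St (if eligible 2 (X ++ R) then Terminated else PhaseTwo) (upd G q S') (X ++ R)).
Proof.
case=> /= pe HG [Hel [w [Hw LB]]] qin pG elS' Xw X1 X2.
have [e1 e2 e3] := R_upd Hw (Xw w Hw) X1 X2.
have pe' := grp_upd pe qin pG.
have sub : {subset S' <= G q} by move=> x xin; rewrite (perm_mem pG) mem_cat xin orbT.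
have HG' := all_upd HG sub.
have Hel' : forall x, x \in qs -> eligible 2 (upd G q S' x).
  by move=> x xin; rewrite /upd; case: eqP => // _; apply: Hel.
case: ifP => el; split => //=.
  split => // sel R' F; have := LB sel R' F; have := hv_le_hmax R' w.
  by case: F => _ _ _; rewrite /eligible; lia.
split => //; exists w; split; first exact: e3 (negbT el).
by rewrite e1.
Qed.

Lemma size_rem_t (S : seq tup) (t : tup) : t \in S -> size (rem t S) + 1 = size S.
Proof. by move=> tin; rewrite (perm_size (perm_to_rem tin)) /= addn1. Qed.

Lemma hv_rem (S : seq tup) t x : hv (rem t S) x <= hv S x.
Proof.
case tin: (t \in S); last by rewrite rem_id ?tin.
by rewrite /hv (permP (perm_to_rem tin)) /=; lia.
Qed.

Lemma step_fat G R v q (t : tup) : eligible 2 T ->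
  Inv (St PhaseTwo G R) ->
  (forall w, alive_val 2 qs G R w -> hv R v <= hv R w) ->
  q \in qs -> fat 2 (G q) -> t \in G q -> t.2 = v ->
  Inv (St (if eligible 2 ([:: t] ++ R) then Terminated else PhaseTwo)
          (upd G q (rem t (G q))) ([:: t] ++ R)).
Proof.
move=> ET I Hmin qin ft tin tv.
apply: step2_gen => //.
- exact: perm_to_rem.
- move: ft; rewrite /fat /eligible => ft.
  have sz := size_rem_t tin.
  apply: (@leq_trans (2 * hmax (G q))); first last. by rewrite -(leq_add2r 1) sz.
  rewrite leq_mul2l /=; apply: hmax_le => x; exact: leq_trans (hv_rem _ _ _) (hv_le_hmax _ _).
- move=> w Hw; case: I => /= pe _ _.
  have [u [uw Au]] := exists_alive ET pe Hw.
  have := Hmin u Au; have := maj_lt Hw uw => h1 h2.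
  rewrite /hv /= tv addn0; case: eqP => // e; subst v; exfalso; rewrite e in h2; lia.
- by move=> x; rewrite /hv /=; case: (_ == _).
Qed.

Lemma step_thin G R v q :
  Inv (St PhaseTwo G R) -> q \in qs -> alive 2 (G q) R -> 0 < hv (G q) v ->
  thin 2 (G q) ->
  let P := undup [seq t <- G q | pillar (G q) t.2] in
  Inv (St (if eligible 2 (P ++ R) then Terminated else PhaseTwo)
          (upd G q (foldr (fun t S => rem t S) (G q) P)) (P ++ R)).
Proof.
move=> I qin al hpos th P.
have HG : forall x, all (fun t : tup => t.1 == x) (G x) by case: I.
set S := G q in hpos th al P *.
set h := hmax S.
have hpos' : 0 < h by apply: leq_trans hpos (hv_le_hmax _ _).
have Pu : uniq P := undup_uniq _.
have Pmem : forall p : tup, p \in P = (p \in S) && pillar S p.2.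
  by move=> p; rewrite mem_undup mem_filter andbC.
have Psub : {subset P <= S} by move=> p; rewrite Pmem => /andP[].
have Sfst : forall t : tup, t \in S -> t.1 == q by move=> t; move/allP: (HG q); apply.
set S' := foldr (fun t S => rem t S) S P.
have pS : perm_eq S (P ++ S') := foldr_rem_perm Pu Psub.
have hvS : forall x, hv S x = hv P x + hv S' x by move=> x; rewrite /hv (permP pS) count_cat.
have szS : size S = @size tup P + @size tup S' by rewrite (perm_size pS) size_cat.
have hvP1 : forall x, hv P x <= 1.
  move=> x; rewrite /hv (@eq_in_count _ _ (pred1 (q, x))).
    by rewrite count_uniq_mem // leq_b1.
  by move=> p pin /=; rewrite tpE (Sfst p (Psub p pin)).
have cS : forall p : tup, p \in P -> count_mem p S = h.
  move=> p pin; move: (pin); rewrite Pmem => /andP[pS' /eqP pil].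
  rewrite /h -pil /hv; apply: eq_in_count => t tin /=.
  case: t tin => a b tin; case: p pin pS' pil => c d pin pS' pil /=.
  rewrite xpair_eqE; have := Sfst _ tin; have := Sfst _ pS' => /= /eqP -> /eqP ->.
  by rewrite eqxx.
have szP : @size tup P <= 2.
  have := @cnt_uniq _ P S h Pu (fun p pin => eq_leq (esym (cS p pin))).
  move: th; rewrite /thin => /eqP ->.
  by rewrite -/h [size P * h]mulnC [2 * h]mulnC leq_pmul2l.
have hvS' : forall x, hv S' x <= h - 1.
  move=> x; have := hvS x; have := hv_le_hmax S x; rewrite -/h.
  case: (posnP (hv P x)) => [P0|Ppos] e1 e2; last by lia.
  suff : hv S x != h by lia.
  apply/negP => /eqP eh; move: P0; apply/eqP; rewrite -lt0n.
  have : 0 < hv S x by rewrite eh.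
  rewrite /hv -!has_count => /hasP[t tin /eqP tx]; apply/hasP; exists t => /=.
    by rewrite Pmem tin /pillar tx eh eqxx.
  by rewrite tx.
apply: step2_gen => //.
- rewrite /eligible; apply: (@leq_trans (2 * (h - 1))).
    by rewrite leq_mul2l; apply/orP; right; apply: hmax_le.
  move: th; rewrite /thin => /eqP e; rewrite -/h in e; lia.
- move=> w Hw; apply/eqP; rewrite -leqn0 leqNgt -has_count; apply/hasP => -[p pin /eqP pw].
  apply: al; split => //; exists w; apply/andP; split.
    by move: pin; rewrite Pmem -pw => /andP[].
  by rewrite /pillar (maj_hmax Hw).
Qed.

End Main.


Section Main.
Variables (Q V : eqType) (T : seq (Q * V)).
Notation tup := (Q * V)%type.
Notation qs := (qis T).

Lemma step_inv s s' : eligible 2 T -> Inv T s -> step 2 qs s s' -> Inv T s' /\ mu T s' < mu T s.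
Proof.
move=> ET I st; case: st I.
- move=> q rest G R t ne tin pil I.
  have I' := step_move I ne tin pil; split => //.
  have := Inv_size I'; rewrite /mu /=; lia.
- move=> q rest G R el I; split; first exact: step_next I el.
  rewrite /mu /=; lia.
- move=> G R el I; split; first exact: step_term I el.
  rewrite /mu /=; lia.
- move=> G R nel I; split; first exact: step_to2 I nel.
  rewrite /mu /=; lia.
- move=> G R H [/= pe _ [_ [w [Hw _]]]].
  have [u [_ Au]] := exists_alive ET pe Hw; by case: (H u).
- move=> G R v q t _ Hmin qin _ _ ft tin tv I.
  have I' := step_fat ET I Hmin qin ft tin tv; split => //.
  have := Inv_size I'; rewrite /mu /=; case: ifP => _ /=. 
  + lia.
  + lia.
- move=> G R v q _ _ qin al hpos th P I.
  have I' : Inv T (St (if eligible 2 (P ++ R) then Terminated else PhaseTwo)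
          (upd G q (foldr (fun t S => rem t S) (G q) P)) (P ++ R))
    := step_thin I qin al hpos th.
  split => //.
  have Pn : 0 < @size tup P.
    have SN : G q != [::] by apply/eqP => e; rewrite e in hpos.
    have [t tin e] := hmax_pillar SN.
    rewrite lt0n size_eq0; apply/eqP => P0.
    have : t \in P by rewrite mem_undup mem_filter tin /pillar e eqxx.
    by rewrite P0.
  have e : @size tup (P ++ R) = @size tup P + size R := size_cat _ _.
  have := Inv_size I'; rewrite /mu /=.
  have -> : (match (if eligible 2 (P ++ R) then Terminated else PhaseTwo) with
     | PhaseOne l => size l + 1 | _ => 0 end) = 0 by case: (eligible 2 (P ++ R)).
  rewrite e; lia.
Qed.

Lemma acc_inv (ET : eligible 2 T) n s : Inv T s -> mu T s < n ->
  Acc (fun s' s => step 2 qs s s') s.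
Proof.
elim: n s => [|n IH] s I lt; first by rewrite ltn0 in lt.
constructor => s' st.
have [I' lt'] := step_inv ET I st; apply: IH => //; lia.
Qed.

Lemma progress s : eligible 2 T -> Inv T s -> ph s <> Terminated -> exists s', step 2 qs s s'.
Proof.
move=> ET; case: s => [[[|q rest]| | |] G R] /= I nt.
- case: (boolP (eligible 2 R)) => el.
    by exists (St Terminated G R); apply: s1_term.
  by exists (St PhaseTwo G R); apply: s1_to2.
- case: (boolP (eligible 2 (G q))) => el.
    by exists (St (PhaseOne rest) G R); apply: s1_next.
  have SN : G q != [::] by apply/eqP => e; rewrite e /eligible /hmax big_nil in el.
  have [t tin e] := hmax_pillar SN.
  exists (St (PhaseOne (q :: rest)) (upd G q (rem t (G q))) (t :: R)).
  by apply: s1_move => //; rewrite /pillar e.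
- case: I => /= pe _ [Hel [w [Hw _]]].
  have [u [_ Au]] := exists_alive ET pe Hw.
  have [v [Av Hmin]] := minimizer (hv R) (ex_intro _ u Au).
  case: (Av) => q qin [al hpos].
  have el := Hel q qin.
  case: (eqVneq (size (G q)) (2 * hmax (G q))) => th.
    have th' : thin 2 (G q) by rewrite /thin th.
    eexists; exact: (s2_thin Av Hmin qin al hpos th').
  have ft : fat 2 (G q) by move: el th; rewrite /eligible /fat; lia.
  move: (hpos); rewrite /hv -has_count => /hasP[t tin /eqP tv].
  eexists; exact: (s2_fat Av Hmin qin al hpos ft tin tv).
- by case: I => _ _ [].
- by [].
Qed.

Lemma Inv_init : Inv T (init T).
Proof.
have HG : forall q, all (fun t : tup => t.1 == q) (qclass T q) by move=> q; exact: filter_all.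
split => //=.
- apply/allP => x _ /=; apply/eqP.
  rewrite count_flatten -map_comp.
  rewrite (@sumn_one _ _ (qclass T) x.1 (pred1 x) qs (uniq_qs T)) //; last first.
    by move=> t /= /eqP ->.
  case: ifP => xin.
    rewrite /qclass count_filter; apply: eq_count => t /=.
    by case: (eqVneq t x) => [->|]; rewrite ?eqxx.
  have := notin_qs (negbT xin).
  have := cnt_split (fun t : tup => t.1 == x.1) (pred1 x) T.
  rewrite (@eq_count _ (fun t => (t.1 == x.1) && pred1 x t) (pred1 x)).
    by move=> e1 e2; move: e1; rewrite e2 => /esym/eqP; rewrite addn_eq0 => /andP[/eqP ->].
  by move=> t /=; case: (eqVneq t x) => [->|]; rewrite ?eqxx ?andbF.
split.
- by apply/allP.
- by move=> q ->.
by move=> q; left.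
Qed.

Lemma reach_inv s : eligible 2 T -> reach 2 qs (init T) s -> Inv T s.
Proof.
move=> ET; elim => [|s1 s2 _ I st]; first exact: Inv_init.
by case: (step_inv ET I st).
Qed.

End Main.

Unset Implicit Arguments.

Theorem theorem2 (Q V : eqType) (T : seq (Q * V)) :
  eligible 2 T ->
  Acc (fun s' s => step 2 (qis T) s s') (init T) /\
  (forall s, reach 2 (qis T) (init T) s ->
     (forall s', ~ step 2 (qis T) s s') -> ph s = Terminated) /\
  (forall s, reach 2 (qis T) (init T) s -> ph s = Terminated ->
     feasible 2 T (grp s) (res s) /\
     (forall sel R', feasible 2 T sel R' -> size (res s) <= size R' + 1)).
Proof.
move=> ET; split; first exact: (acc_inv ET (Inv_init T) (ltnSn _)).
split.
  move=> s r H; apply: NNPP => nt.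
  have [s' st] := progress ET (reach_inv ET r) nt.
  exact: H s' st.
move=> s r e; have := reach_inv ET r.
case: s e r => ph G R /= -> _ [pe HG [Hel ER B]]; split => //.
Qed.
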